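(* Let $n>4$, let $k$ be a divisor of $n$ with $1<k\le n/2$, write $n=km$, let $G\in\{\mathrm{Sym}(n),\mathrm{Alt}(n)\}$, and let $\Omega$ be the set of partitions of $\{1,\dots,n\}$ into $m$ parts of size $k$, with the natural action of $G$. Then $G$ contains an element of prime order $p$ that is quasi-semiregular on $\Omega$ if and only if $p$ is odd, $k=p$ and $2\le m\le p$. Moreover, if $g$ is a quasi-semiregular element of prime order $p$ and $\Gamma=\{\Gamma_1,\dots,\Gamma_m\}$ is the unique $g$-invariant partition in $\Omega$, then $g\in\mathrm{Alt}(n)$, $g$ fixes each $\Gamma_i$ setwise, and either (1) $m=p$ and $g$ lies in the unique $G$-conjugacy class of elements of cycle type $1^pp^{m-1}$; or (2) $2\le m<p$ and $g$ lies in one of two $G$-conjugacy classes, namely the elements of cycle type $1^pp^{m-1}$ or those of cycle type $p^m$.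
   Context: A permutation $g$ is quasi-semiregular if $\langle g\rangle$ has a unique fixed point and acts semiregularly (only the identity fixes a point) on the remaining points. *)

(* Defs.v *)
From mathcomp Require Import all_boot all_fingroup all_solvable.
Set Implicit Arguments. Unset Strict Implicit. Unset Printing Implicit Defensive.
Local Open Scope group_scope.

Definition part_act (T : finType) (g : {perm T}) (P : {set {set T}}) : {set {set T}} :=
  [set [set g x | x in B] | B : {set T} in P].

Definition uniform_partitions (T : finType) (k : nat) : {set {set {set T}}} :=
  [set P : {set {set T}} | partition P [set: T] && [forall B in P, #|B| == k]].

Definition quasi_semiregular (T : finType) (g : {perm T})
    (Omega : {set {set {set T}}}) : Prop :=
  exists2 w, w \in Omega &
    (forall h, h \in <[g]> -> part_act h w = w) /\
    (forall x, x \in Omega -> (forall h, h \in <[g]> -> part_act h x = x) -> x = w) /\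
    (forall x h, x \in Omega -> x != w -> h \in <[g]> -> part_act h x = x -> h = 1).

Definition ncycles (T : finType) (g : {perm T}) (l : nat) : nat :=
  #|[set O in porbits g | (#|O| == l)%N]|.

(* cycle type of g is 1^a l^b (with l > 1): a fixed points, b cycles of length l,
   and no other cycles *)
Definition has_cycle_type_1l (T : finType) (g : {perm T}) (a l b : nat) : Prop :=
  [/\ ncycles g 1%N = a, ncycles g l = b &
      forall O, O \in porbits g -> (#|O| = 1)%N \/ #|O| = l].

(* Main.v *)
Require Import Defs.
From mathcomp Require Import all_boot all_fingroup all_solvable.
From mathcomp Require Import zify.
Set Implicit Arguments. Unset Strict Implicit. Unset Printing Implicit Defensive.
Local Open Scope group_scope.

Section Gen.
Variable T : finType.
Implicit Types (g h c : {perm T}) (x y z : T) (A B : {set T}) (P : {set {set T}}).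

Lemma porbit_dvd g x : (#|porbit g x| %| #[g])%N.
Proof.
have -> : porbit g x = orbit 'P <[g]> x by rewrite porbit.unlock.
exact: dvdn_orbit.
Qed.

Lemma eqp_partition (f : T -> {set T}) :
  (forall z, z \in f z) -> (forall z y, y \in f z -> f y = f z) ->
  partition (f @: T) [set: T].
Proof.
move=> fz fy; apply/and3P; split.
- apply/eqP/setP=> x; rewrite inE; apply/bigcupP; exists (f x) => //; exact: imset_f.
- apply/trivIsetP=> _ _ /imsetP[a _ ->] /imsetP[b _ ->] neq.
  rewrite -setI_eq0; apply/eqP/setP=> u; rewrite !inE.
  apply/andP=> -[ua ub]; move/negP: neq; apply; by rewrite -(fy _ _ ua) -(fy _ _ ub).
- apply/negP=> /imsetP[a _ e]; by move: (fz a); rewrite -e inE.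
Qed.

Lemma eqp_uniform (f : T -> {set T}) k :
  (forall z, z \in f z) -> (forall z y, y \in f z -> f y = f z) -> (forall z, #|f z| = k) ->
  f @: T \in uniform_partitions T k.
Proof.
move=> h1 h2 h3; rewrite inE eqp_partition //=.
apply/forall_inP=> _ /imsetP[z _ ->]; by rewrite h3.
Qed.

Lemma unif_part P k : P \in uniform_partitions T k ->
  partition P [set: T] /\ {in P, forall B, #|B| = k}.
Proof. rewrite inE => /andP[pP /forall_inP H]; split=> // B /H /eqP //. Qed.

Lemma blk_mem P x : partition P [set: T] -> pblock P x \in P.
Proof. case/and3P=> /eqP cP _ _; apply: pblock_mem; by rewrite cP inE. Qed.
Lemma blk_in P x : partition P [set: T] -> x \in pblock P x.
Proof. case/and3P=> /eqP cP _ _; by rewrite mem_pblock cP inE. Qed.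
Lemma blk_eq P B x : partition P [set: T] -> B \in P -> x \in B -> pblock P x = B.
Proof. case/and3P=> _ tP _; exact: def_pblock. Qed.
Lemma blk_meet P B1 B2 x : partition P [set: T] -> B1 \in P -> B2 \in P ->
  x \in B1 -> x \in B2 -> B1 = B2.
Proof. move=> pP h1 h2 x1 x2; by rewrite -(blk_eq pP h1 x1) (blk_eq pP h2 x2). Qed.
Lemma blk_n0 P B : partition P [set: T] -> B \in P -> exists x, x \in B.
Proof.
case/and3P=> _ _ P0 BP; case: (set_0Vmem B) => [E|[x xB]]; last by exists x.
by move: P0; rewrite -E BP.
Qed.

Lemma part_actM c d P : part_act (c * d) P = part_act d (part_act c P).
Proof.
rewrite /part_act -imset_comp; apply: eq_imset => B /=.
rewrite -imset_comp; apply: eq_imset => x /=; by rewrite permM.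
Qed.

Lemma part_act1 P : part_act 1 P = P.
Proof.
rewrite /part_act -[RHS]imset_id; apply: eq_imset => B.
rewrite -[RHS]imset_id; apply: eq_imset => x; by rewrite perm1.
Qed.

Lemma part_act_unif c P k : P \in uniform_partitions T k ->
  part_act c P \in uniform_partitions T k.
Proof.
move=> /unif_part [pP sP].
have -> : part_act c P = (fun z => [set c x | x in pblock P (c^-1 z)]) @: T.
  apply/setP=> C; apply/imsetP/imsetP.
  - case=> B BP ->; have [x xB] := blk_n0 pP BP; exists (c x) => //.
    by rewrite permK (blk_eq pP BP xB).
  - by case=> z _ ->; exists (pblock P (c^-1 z)) => //; exact: blk_mem.
apply: eqp_uniform.
- move=> z; apply/imsetP; exists (c^-1 z); [exact: blk_in | by rewrite permKV].
- move=> z y /imsetP[u uB ->]; by rewrite permK (blk_eq pP (blk_mem _ pP) uB).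
- move=> z; by rewrite card_imset ?sP ?(blk_mem _ pP) //; exact: perm_inj.
Qed.

Lemma part_actX g P : part_act g P = P -> forall i, part_act (g ^+ i) P = P.
Proof. move=> H; elim=> [|i IH]; first by rewrite expg0 part_act1.
by rewrite expgSr part_actM IH H. Qed.

Lemma qsr_fix g (Om : {set {set {set T}}}) : quasi_semiregular g Om -> exists2 w, w \in Om &
  part_act g w = w /\ forall Q, Q \in Om -> part_act g Q = Q -> Q = w.
Proof.
case=> w wO [H1 [H2 _]]; exists w => //; split; first exact: H1 (cycle_id g).
move=> Q xO Hx; apply: H2 => // h /cycleP[i ->]; exact: part_actX.
Qed.

Lemma fix_qsr g (Om : {set {set {set T}}}) w : prime #[g] -> w \in Om -> part_act g w = w ->
  (forall Q, Q \in Om -> part_act g Q = Q -> Q = w) -> quasi_semiregular g Om.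
Proof.
move=> pr wO Hw U; exists w => //; split; first by move=> h /cycleP[i ->]; exact: part_actX.
split; first by move=> x xO H; apply: U => //; exact: H (cycle_id g).
move=> x h xO xw /cyclePmin[i ilt ->] Hx.
case: (posnP i) => [->|i0]; first by rewrite expg0.
have: generator <[g]> (g ^+ i).
  rewrite generator_coprime prime_coprime // gtnNdvd //.
move/eqP=> E; have: g \in <[g ^+ i]> by rewrite -E cycle_id.
case/cycleP=> j Ej; case/negP: xw; apply/eqP; apply: U => //.
by rewrite Ej part_actX.
Qed.
End Gen.

Section Rep.
Variable T : finType.
Implicit Types (g h c : {perm T}) (x y z : T) (A B : {set T}) (P : {set {set T}}).

Lemma porbit_eq g x y : y \in porbit g x -> porbit g y = porbit g x.
Proof. by move=> H; apply/eqP; rewrite eq_porbit_mem. Qed.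

Lemma porbitS g x : porbit g (g x) = porbit g x.
Proof. apply: porbit_eq; apply/porbitP; exists 1%N; by rewrite expg1. Qed.

Lemma porbit_fix g x : g x = x -> porbit g x = [set x].
Proof.
move=> H; apply/setP=> y; rewrite inE; apply/porbitP/eqP => [[i ->]|->].
  exact: permX_fix.
by exists 0; rewrite expg0 perm1.
Qed.

Lemma porbit1 g x : (#|porbit g x| == 1%N) = (g x == x).
Proof.
apply/idP/eqP=> [/cards1P[a E]|H]; last by rewrite porbit_fix // cards1.
have: x \in porbit g x by exact: porbit_id.
have: g x \in porbit g x by apply/porbitP; exists 1%N; rewrite expg1.
by rewrite E !inE => /eqP -> /eqP ->.
Qed.

Definition rep g x := odflt x [pick y in porbit g x].

Lemma rep_in g x : rep g x \in porbit g x.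
Proof. rewrite /rep; case: pickP => [y //|/(_ x)]; by rewrite porbit_id. Qed.

Lemma porbit_rep g x : porbit g (rep g x) = porbit g x.
Proof. exact/porbit_eq/rep_in. Qed.

Lemma rep_eq g x y : porbit g x = porbit g y -> rep g x = rep g y.
Proof.
rewrite /rep => ->; case: pickP => // /(_ y); by rewrite porbit_id.
Qed.

Lemma rep_rep g x : rep g (rep g x) = rep g x.
Proof. exact/rep_eq/porbit_rep. Qed.

Lemma rep_fix g x : g x = x -> rep g x = x.
Proof. move=> H; have := rep_in g x; by rewrite porbit_fix // inE => /eqP. Qed.

Lemma repS g x : rep g (g x) = rep g x.
Proof. exact/rep_eq/porbitS. Qed.

Lemma reps_eq g u v : rep g u = u -> rep g v = v -> u \in porbit g v -> u = v.
Proof. move=> Hu Hv /porbit_eq/rep_eq; by rewrite Hu Hv. Qed.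

Definition ex g x := index x (traject g (rep g x) #|porbit g x|).

Lemma ex_mem g x : x \in traject g (rep g x) #|porbit g x|.
Proof. have := porbit_traject g (rep g x) x; rewrite porbit_rep => <-; exact: porbit_id. Qed.

Lemma ex_lt g x : (ex g x < #|porbit g x|)%N.
Proof. by rewrite /ex -{2}(size_traject g (rep g x) #|porbit g x|) index_mem ex_mem. Qed.

Lemma ex_spec g x : iter (ex g x) g (rep g x) = x.
Proof.
by rewrite -(nth_traject _ (ex_lt g x)) nth_index // ex_mem.
Qed.

Lemma ex_specX g x : (g ^+ ex g x) (rep g x) = x.
Proof. by rewrite permX ex_spec. Qed.

Lemma iter_mod g x i : iter i g x = iter (i %% #|porbit g x|) g x.
Proof.
have H q : iter (q * #|porbit g x|) g x = x.
  elim: q => [|q IH] //; by rewrite mulSn iterD IH iter_porbit.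
by rewrite {1}(divn_eq i #|porbit g x|) addnC iterD H.
Qed.

Lemma iter_inj g x i j : (i < #|porbit g x|)%N -> (j < #|porbit g x|)%N ->
  iter i g x = iter j g x -> i = j.
Proof.
move=> hi hj E; apply/eqP.
rewrite -(nth_uniq x (s := traject g x #|porbit g x|)) ?size_traject //;
  last exact: uniq_traject_porbit.
by rewrite !nth_traject // E.
Qed.

Lemma ex_rep g x : ex g (rep g x) = 0%N.
Proof.
apply: (@iter_inj g (rep g x)); first exact: ex_lt.
  by rewrite lt0n card_porbit_neq0.
have := ex_spec g (rep g x); by rewrite rep_rep.
Qed.

Section Eqv.
Variables (g h : {perm T}) (psi : T -> T).
Hypothesis H1 : forall x, #|porbit h (psi (rep g x))| = #|porbit g x|.
Hypothesis H2 : forall x y, psi (rep g x) \in porbit h (psi (rep g y)) ->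
  porbit g x = porbit g y.

Definition eqv_fun z := iter (ex g z) h (psi (rep g z)).

Lemma eqv_inj : injective eqv_fun.
Proof.
move=> z z'; rewrite /eqv_fun => E.
have Ho : porbit g z = porbit g z'.
  apply: H2.
  have <- : porbit h (psi (rep g z)) = porbit h (psi (rep g z')).
    by rewrite -(porbit_perm h (ex g z) (psi (rep g z))) -(porbit_perm h (ex g z') (psi (rep g z'))) !permX E.
  exact: porbit_id.
have Hr := rep_eq Ho; rewrite -Hr in E.
have Hs : #|porbit g z'| = #|porbit g z| by rewrite Ho.
have He : ex g z = ex g z'.
  apply: (iter_inj (g := h) (x := psi (rep g z))) => //; rewrite H1 ?ex_lt //.
  rewrite -Hs; exact: ex_lt.
by rewrite -(ex_spec g z) -(ex_spec g z') Hr He.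
Qed.

Definition eqv := perm eqv_inj.

Lemma eqv_comm z : eqv (g z) = h (eqv z).
Proof.
rewrite !permE /eqv_fun repS.
set d := #|porbit g z|.
have d0 : (0 < d)%N by rewrite lt0n card_porbit_neq0.
have Hd : #|porbit g (rep g z)| = d by rewrite porbit_rep.
have He : ex g (g z) = ((ex g z).+1 %% d)%N.
  apply: (iter_inj (g := g) (x := rep g z)); rewrite ?Hd ?ltn_pmod //.
    by have := ex_lt g (g z); rewrite porbitS.
  have := ex_spec g (g z); rewrite repS => ->.
  by rewrite -Hd -iter_mod iterS ex_spec.
rewrite He -iterS [RHS]iter_mod H1 //.
Qed.

Lemma eqv_rep x : eqv (rep g x) = psi (rep g x).
Proof. by rewrite permE /eqv_fun ex_rep rep_rep. Qed.
End Eqv.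

Lemma commX (phi : T -> T) g h : (forall z, phi (g z) = h (phi z)) ->
  forall i z, phi ((g ^+ i) z) = (h ^+ i) (phi z).
Proof. move=> H i z; rewrite !permX; elim: i => //= i IH; by rewrite H IH. Qed.

Lemma conj_of (phi : {perm T}) g h : (forall z, phi (g z) = h (phi z)) -> g ^ phi = h.
Proof. move=> H; apply/permP => y; by rewrite -(permKV phi y) permJ H. Qed.

Lemma comm_rep_fix (phi : T -> T) g z : (forall z, phi (g z) = g (phi z)) ->
  phi (rep g z) = rep g z -> phi z = z.
Proof. move=> H E; by rewrite -{1}(ex_specX g z) (commX H) E ex_specX. Qed.

Lemma rot_exists g (s : seq T) q : uniq s ->
  (forall u, u \in s -> rep g u = u /\ #|porbit g u| = q) ->
  exists phi : {perm T}, (forall z, phi (g z) = g (phi z)) /\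
     (forall x, phi (rep g x) = next s (rep g x)).
Proof.
move=> Us Hs.
have nrep x : rep g (next s (rep g x)) = next s (rep g x).
  case: (boolP (rep g x \in s)) => xs; first by case: (Hs _ (etrans (mem_next _ _) xs)).
  by rewrite next_nth (negbTE xs) rep_rep.
have H1 x : #|porbit g (next s (rep g x))| = #|porbit g x|.
  rewrite -(porbit_rep g x); case: (boolP (rep g x \in s)) => xs.
    by rewrite (Hs _ xs).2 (Hs _ (etrans (mem_next _ _) xs)).2.
  by rewrite next_nth (negbTE xs).
have H2 x y : next s (rep g x) \in porbit g (next s (rep g y)) -> porbit g x = porbit g y.
  move/(reps_eq (nrep x) (nrep y))/(can_inj (prev_next Us)) => E.
  by rewrite -porbit_rep E porbit_rep.
exists (eqv H1 H2); split; [exact: eqv_comm | exact: eqv_rep].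
Qed.
End Rep.

Section Count.
Variable T : finType.
Implicit Types (g h c : {perm T}) (x y z : T) (A B : {set T}) (P : {set {set T}}).

Lemma porbits_part g : partition (porbits g) [set: T].
Proof. apply: eqp_partition; [exact: porbit_id | move=> z y; exact: porbit_eq]. Qed.

Lemma sum_ind P (b : {set T} -> bool) :
  (\sum_(O in P) (b O : nat) = #|[set O in P | b O]|)%N.
Proof.
rewrite -sum1_card big_mkcond [RHS]big_mkcond /=; apply: eq_bigr => O _.
by rewrite inE; case: (O \in P); case: (b O).
Qed.

Lemma L_type g q : (1 < q)%N ->
  (forall x, #|porbit g x| = 1%N \/ #|porbit g x| = q) ->
  #|T| = (ncycles g 1 + q * ncycles g q)%N /\
  #|porbits g| = (ncycles g 1 + ncycles g q)%N.
Proof.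
move=> q1 Hq.
have HO O : O \in porbits g ->
   #|O| = ((#|O| == 1%N) + q * (#|O| == q))%N /\ 1%N = ((#|O| == 1%N) + (#|O| == q))%N.
  case/imsetP=> x _ ->; case: (Hq x) => ->; rewrite eqxx.
    by rewrite (eq_sym 1%N) (gtn_eqF q1) muln0.
  by rewrite (gtn_eqF q1) muln1.
split.
  rewrite -cardsT (card_partition (porbits_part g)).
  rewrite (eq_bigr _ (fun O HOin => (HO O HOin).1)) big_split /= -big_distrr /=.
  by rewrite !sum_ind.
rewrite -sum1_card (eq_bigr _ (fun O HOin => (HO O HOin).2)) big_split /=.
by rewrite !sum_ind.
Qed.

Lemma ncycles1 g : ncycles g 1 = #|[set x | g x == x]|.
Proof.
rewrite /ncycles.
suff -> : [set O in porbits g | #|O| == 1%N] = [set [set x] | x in [set x | g x == x]].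
  by rewrite card_imset //; exact: set1_inj.
apply/setP=> O; rewrite inE; apply/andP/imsetP.
  case=> /imsetP[x _ ->] H; exists x; first by rewrite inE -porbit1.
  by apply/porbit_fix/eqP; rewrite -porbit1.
case=> x; rewrite inE => /eqP H ->; rewrite -(porbit_fix H); split.
  exact: imset_f. by rewrite porbit1 H.
Qed.

Lemma ncyclesq g q : (1 < q)%N -> (forall x, g x != x -> #|porbit g x| = q) ->
  ncycles g q = #|[set rep g x | x in [set x | g x != x]]|.
Proof.
move=> q1 Hq; rewrite /ncycles.
suff -> : [set O in porbits g | #|O| == q] = porbit g @: [set rep g x | x in [set x | g x != x]].
  rewrite card_in_imset //.
  move=> _ _ /imsetP[x _ ->] /imsetP[y _ ->] E.
  by apply: (@reps_eq _ g); rewrite ?rep_rep // -E porbit_id.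
apply/setP=> O; rewrite inE; apply/andP/imsetP.
  case=> /imsetP[x _ ->] H; exists (rep g x); last by rewrite porbit_rep.
  apply: imset_f; rewrite inE -porbit1; apply: contraTN H => /eqP ->.
  by rewrite eq_sym gtn_eqF.
case=> _ /imsetP[x + ->] ->; rewrite inE => H; split; first exact: imset_f.
by rewrite porbit_rep Hq.
Qed.

Lemma porbitJ g c x : porbit (g ^ c) (c x) = [set c y | y in porbit g x].
Proof.
apply/setP=> u; apply/porbitP/imsetP.
  case=> i ->; exists ((g ^+ i) x); first exact: mem_porbit.
  by rewrite -conjXg permJ.
case=> y /porbitP[i ->] ->; exists i; by rewrite -conjXg permJ.
Qed.

Lemma porbitsJ g c : porbits (g ^ c) = [set [set c y | y in O] | O : {set T} in porbits g].
Proof.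
apply/setP=> O; apply/imsetP/imsetP.
  case=> y _ ->; exists (porbit g (c^-1 y)); first exact: imset_f.
  by rewrite -porbitJ permKV.
case=> _ /imsetP[x _ ->] ->; exists (c x) => //; by rewrite porbitJ.
Qed.

Lemma ncyclesJ g c l : ncycles (g ^ c) l = ncycles g l.
Proof.
rewrite /ncycles.
suff -> : [set O in porbits (g ^ c) | #|O| == l] =
  (fun O : {set T} => [set c y | y in O]) @: [set O in porbits g | #|O| == l].
  by rewrite card_imset //; apply: imset_inj; exact: perm_inj.
apply/setP=> O; rewrite inE porbitsJ; apply/andP/imsetP.
  case=> /imsetP[O' O'in ->]; rewrite card_imset; last exact: perm_inj.
  by move=> H; exists O' => //; rewrite inE O'in.
case=> O'; rewrite inE => /andP[O'in H] ->; split; first exact: imset_f.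
by rewrite card_imset //; exact: perm_inj.
Qed.

Lemma typeJ g c a l b : has_cycle_type_1l g a l b -> has_cycle_type_1l (g ^ c) a l b.
Proof.
case=> h1 h2 h3; split; rewrite ?ncyclesJ //.
move=> O; rewrite porbitsJ => /imsetP[O' O'in ->].
by rewrite card_imset; [exact: h3 | exact: perm_inj].
Qed.

Lemma dvd_union P k (S : {set T}) : P \in uniform_partitions T k ->
  (forall B, B \in P -> forall x, x \in B -> x \in S -> B \subset S) ->
  (k %| #|S|)%N.
Proof.
move=> /unif_part [pP sP] H.
set Q := [set B in P | B \subset S].
have QP : Q \subset P by apply/subsetP=> B; rewrite inE => /andP[].
have pQ : partition Q S.
  case/and3P: (pP) => _ tP P0; apply/and3P; split.
  - apply/eqP/setP=> x; apply/bigcupP/idP.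
      by case=> B; rewrite inE => /andP[_ /subsetP] h /h.
    move=> xS; exists (pblock P x); last exact: blk_in.
    by rewrite inE blk_mem //= (H _ (blk_mem _ pP) _ (blk_in _ pP)).
  - exact: trivIsetS QP tP.
  - by apply: contra P0; rewrite inE => /andP[].
rewrite (@card_uniform_partition _ k _ _ _ pQ) ?dvdn_mull // => B /(subsetP QP); exact: sP.
Qed.
End Count.

Section Helpers.
Variable T : finType.
Implicit Types (g h c : {perm T}) (x y z : T) (A B : {set T}) (P : {set {set T}}).

Lemma prime_sz g x : prime #[g] -> #|porbit g x| = 1%N \/ #|porbit g x| = #[g].
Proof.
move=> pr; case: (eqVneq #|porbit g x| 1%N) => [->|ne]; first by left.
by right; apply/(prime_nt_dvdP pr ne)/porbit_dvd.
Qed.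

Lemma nf_sz g x : prime #[g] -> g x != x -> #|porbit g x| = #[g].
Proof. move=> pr nf; case: (prime_sz x pr) => // /eqP; by rewrite porbit1 (negbTE nf). Qed.

Lemma porbit_nf g x y : y \in porbit g x -> (g y == y) = (g x == x).
Proof. by move/porbit_eq => E; rewrite -!porbit1 E. Qed.

Lemma set_inv g A : (forall u, u \in A -> g u \in A) -> [set g u | u in A] = A.
Proof.
move=> H; apply/eqP; rewrite eqEcard card_imset; last exact: perm_inj.
rewrite leqnn andbT; apply/subsetP=> _ /imsetP[u uA ->]; exact: H.
Qed.

Lemma set_invC g A : [set g u | u in A] = A -> [set g u | u in ~: A] = ~: A.
Proof.
move=> E; apply: set_inv => u; rewrite !inE; apply: contra => gA.
by rewrite -E in gA; case/imsetP: gA => a aA /perm_inj ->.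
Qed.

Lemma part_act_fix g P : (forall B, B \in P -> [set g u | u in B] = B) -> part_act g P = P.
Proof.
move=> H; rewrite /part_act -[RHS]imset_id; apply: eq_in_imset => B; exact: H.
Qed.

Lemma next2 (a b : T) : next [:: a; b] a = b.
Proof. by rewrite /next /= eqxx. Qed.

Lemma next_notin (s : seq T) u : u \notin s -> next s u = u.
Proof. by move=> H; rewrite next_nth (negbTE H). Qed.

Lemma next_neq (s : seq T) u : uniq s -> (1 < size s)%N -> u \in s -> next s u != u.
Proof.
case: s => [//|a s'] Us sz us; rewrite next_nth us.
set i := index u (a :: s').
have ilt : (i < size (a :: s'))%N by rewrite index_mem.
have ui : nth a (a :: s') i = u by rewrite nth_index.
case: (ltnP i (size s')) => H.
  have -> : nth a s' i = nth a (a :: s') i.+1 by [].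
  by rewrite -ui nth_uniq //= ?ltnS // eqn_leq ltnn.
rewrite nth_default //; apply/eqP => au.
have : nth a (a :: s') 0 == nth a (a :: s') i by rewrite /= ui au.
rewrite nth_uniq //; move/eqP=> i0.
by move: sz H; rewrite -i0 /=; case: (size s').
Qed.

Lemma iter_next (s : seq T) u : uniq s -> iter (size s) (next s) u = u.
Proof.
move=> Us; case: (boolP (u \in s)) => us.
  rewrite -(order_cycle (cycle_next Us) Us us); apply: iter_order; exact: (can_inj (prev_next Us)).
elim: (size s) => //= i ->; exact: next_notin.
Qed.
End Helpers.

Section Core.
Variable T : finType.
Variables (g : {perm T}) (k m : nat) (w : {set {set T}}).
Hypotheses (pr : prime #[g]) (k1 : (1 < k)%N) (m2 : (2 <= m)%N) (nT : #|T| = (k * m)%N).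
Hypothesis wO : w \in uniform_partitions T k.
Hypothesis wfix : part_act g w = w.
Hypothesis wuniq : forall Q, Q \in uniform_partitions T k -> part_act g Q = Q -> Q = w.

Let pP : partition w [set: T] := (unif_part wO).1.
Let sw : {in w, forall B : {set T}, #|B| = k} := (unif_part wO).2.

Lemma cardw : #|w| = m.
Proof.
have := card_uniform_partition sw pP; rewrite cardsT nT mulnC => /eqP.
by rewrite eqn_pmul2r ?(ltnW k1) // => /eqP.
Qed.

Lemma comm_inv (c : {perm T}) : (forall z, c (g z) = g (c z)) ->
  forall B, B \in w -> [set c x | x in B] \in w.
Proof.
move=> H B BP.
have E : part_act c w = w.
  apply: wuniq; first exact: part_act_unif.
  have cg : c * g = g * c by apply/permP => z; rewrite !permM H.
  by rewrite -part_actM cg part_actM wfix.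
by rewrite -E; apply: imset_f.
Qed.

Lemma memS x0 u : (g u \in porbit g x0) = (u \in porbit g x0).
Proof. by rewrite -!eq_porbit_mem porbitS. Qed.

Lemma cyc_inj x0 : injective (fun z => if z \in porbit g x0 then g z else z).
Proof.
move=> a b /=; case: ifP => ha; case: ifP => hb.
- exact: perm_inj.
- by move=> E; move: hb; rewrite -E memS ha.
- by move=> E; move: ha; rewrite E memS hb.
- by [].
Qed.

Lemma blockS B z y : B \in w -> z \in B -> y \in B -> y \notin porbit g z ->
  porbit g z \subset B.
Proof.
move=> BP zB yB yO.
set c := perm (@cyc_inj z).
have cE u : c u = if u \in porbit g z then g u else u by rewrite permE.
have Hc : forall u, c (g u) = g (c u).
  by move=> u; rewrite !cE memS; case: ifP.
have cB := comm_inv Hc BP.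
have E : [set c x | x in B] = B.
  apply: (blk_meet pP cB BP (x := y)) => //.
  by apply/imsetP; exists y => //; rewrite cE (negbTE yO).
have step u : u \in B -> u \in porbit g z -> g u \in B.
  by move=> uB uO; rewrite -E; apply/imsetP; exists u => //; rewrite cE uO.
apply/subsetP=> _ /porbitP[i ->]; elim: i => [|i IH]; first by rewrite expg0 perm1.
by rewrite expgSr permM step // mem_porbit.
Qed.

Lemma blockO B z : B \in w -> z \in B -> porbit g z \subset B.
Proof.
move=> BP zB; case: (boolP (B \subset porbit g z)) => [BO|/subsetPn[y yB yO]];
  last exact: blockS yB yO.
have dv : (k %| #|porbit g z|)%N.
  apply: (dvd_union wO) => B' B'P u uB' uO.
  apply/negPn/negP=> /subsetPn[y y1 y2].
  have := blockS B'P uB' y1; rewrite (porbit_eq uO) => /(_ y2) OB'.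
  have zB' : z \in B' by apply: (subsetP OB'); exact: porbit_id.
  have yB : y \in B by rewrite (blk_meet pP BP B'P zB zB').
  by rewrite (subsetP BO _ yB) in y2.
have sz : #|porbit g z| = k.
  case: (prime_sz z pr) => H; first by move: dv; rewrite H dvdn1 => /eqP E; move: k1; rewrite E.
  move: dv; rewrite H => dv; apply/esym/(prime_nt_dvdP pr _ dv).
  by rewrite neq_ltn k1 orbT.
have : B == porbit g z by rewrite eqEcard BO sz (sw BP) leqnn.
by move/eqP <-.
Qed.

Lemma blockG B : B \in w -> [set g x | x in B] = B.
Proof.
move=> BP; apply: set_inv => u uB; apply: (subsetP (blockO BP uB)).
by rewrite -(expg1 g) mem_porbit.
Qed.

Lemma fixblock B x y : B \in w -> x \in B -> g x = x -> g y = y -> y \in B.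
Proof.
move=> BP xB gx gy; case: (boolP (y \in B)) => // yB.
have Hc u : tperm x y (g u) = g (tperm x y u).
  case: (tpermP x y u) => [->|->|ux uy]; rewrite ?gx ?gy ?tpermL ?tpermR //.
  rewrite tpermD //; apply/eqP => E; [apply: ux | apply: uy];
    apply: (@perm_inj _ g); by rewrite ?gx ?gy E.
have cB := comm_inv Hc BP.
have : (0 < #|B :\ x|)%N by move: (cardsD1 x B); rewrite xB (sw BP) => E; move: k1; rewrite E add1n ltnS.
rewrite card_gt0 => /set0Pn[u]; rewrite !inE => /andP[ux uB].
have uy : u != y by apply: contraNneq yB => <-.
have E : [set tperm x y v | v in B] = B.
  apply: (blk_meet pP cB BP (x := u)) => //.
  by apply/imsetP; exists u => //; rewrite tpermD // eq_sym.
by move: yB; rewrite -E; case/negP; apply/imsetP; exists x => //; rewrite tpermL.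
Qed.

Lemma other_block B : B \in w -> exists2 B', B' \in w & B' != B.
Proof.
move=> BP; have : (0 < #|w :\ B|)%N.
  by move: (cardsD1 B w); rewrite BP cardw => E; move: m2; rewrite E; case: #|_|.
rewrite card_gt0 => /set0Pn[B']; rewrite !inE => /andP[ne B'P]; by exists B'.
Qed.

Lemma nonempty_block B : B \in w -> exists x, x \in B.
Proof. exact: blk_n0 pP. Qed.

Lemma swap_contra B B' t u v : B \in w -> B' \in w -> B != B' ->
  t \in B -> u \in B -> v \in B' -> g u != u -> g v != v ->
  porbit g t != porbit g u -> porbit g t != porbit g v -> False.
Proof.
move=> BP B'P nBB' tB uB vB' nu nv tu tv.
have ruB : rep g u \in B := subsetP (blockO BP uB) _ (rep_in g u).
have rvB' : rep g v \in B' := subsetP (blockO B'P vB') _ (rep_in g v).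
have ruv : rep g u != rep g v.
  apply: contra_neq nBB' => E; apply: (blk_meet pP BP B'P ruB); by rewrite E.
set s := [:: rep g u; rep g v].
have Us : uniq s by rewrite /s /= inE ruv.
have Hs : forall a, a \in s -> rep g a = a /\ #|porbit g a| = #[g].
  move=> a; rewrite !inE => /orP[]/eqP ->; rewrite rep_rep porbit_rep nf_sz //.
have [sg [Hc Hr]] := rot_exists Us Hs.
have st : sg t = t.
  apply: (comm_rep_fix Hc); rewrite Hr next_notin // !inE.
  apply/norP; split; apply/negP=> /eqP E.
    by move/eqP: tu; apply; rewrite -porbit_rep E porbit_rep.
  by move/eqP: tv; apply; rewrite -porbit_rep E porbit_rep.
have E : [set sg x | x in B] = B.
  apply: (blk_meet pP (comm_inv Hc BP) BP (x := t)) => //.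
  by apply/imsetP; exists t.
have : rep g v \in B.
  rewrite -E; apply/imsetP; exists (rep g u) => //.
  by rewrite -(rep_rep g u) Hr rep_rep next2.
by move=> rvB; case/negP: nBB'; apply/eqP; apply: (blk_meet pP BP B'P rvB).
Qed.

Lemma in_orb B v x : B \in w -> v \in B -> x \in porbit g v -> x \in B.
Proof. move=> BP vB; exact: (subsetP (blockO BP vB)). Qed.

Lemma porbit_mem_eq t v : porbit g t = porbit g v -> t \in porbit g v.
Proof. by move=> <-; exact: porbit_id. Qed.

Lemma E1 B z w0 : B \in w -> z \in B -> g z != z -> w0 \in B ->
  w0 \notin porbit g z -> g w0 != w0 ->
  (forall B'', B'' \in w -> B'' != B -> forall v, v \in B'' -> g v = v) -> False.
Proof.
move=> BP zB nz w0B w0O nw0 Hall.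
set F := [set x | g x == x].
have [B' B'P nB'] := other_block BP.
have [x' x'B'] := nonempty_block B'P.
have HF B'' : B'' \in w -> B'' != B -> B'' = F.
  move=> B''P ne; have [x'' x''B] := nonempty_block B''P.
  apply/setP=> u; rewrite inE; apply/idP/eqP; first exact: (Hall _ B''P ne).
  move=> gu; apply: (fixblock B''P x''B) => //; exact: (Hall _ B''P ne _ x''B).
have FP : F \in w by rewrite -(HF _ B'P nB').
have wsub : w \subset [set B; F].
  apply/subsetP=> B'' B''P; case: (eqVneq B'' B) => [->|ne]; first by rewrite !inE eqxx.
  by rewrite (HF _ B''P ne) !inE eqxx orbT.
have m2' : m = 2.
  apply/eqP; rewrite eqn_leq m2 andbT -cardw.
  apply: leq_trans (subset_leq_card wsub) _; by rewrite cards2; case: (_ != _).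
have cF : #|F| = k by rewrite sw.
set O := porbit g z.
have OB : O \subset B := blockO BP zB.
have cO : #|O| = #[g] := nf_sz pr nz.
have pk : (#[g] < k)%N.
  rewrite -cO -(sw BP); apply: proper_card; rewrite properE OB /=.
  by apply/subsetPn; exists w0.
have [s0 [Us0 ss0 sub0]] : exists s0 : seq T, [/\ uniq s0, size s0 = #[g] & {subset s0 <= F}].
  by apply/card_geqP; rewrite cF ltnW.
set S := [set x in s0].
have cS : #|S| = #[g] by rewrite cardsE; move/card_uniqP: Us0 => ->.
have SF : S \subset F by apply/subsetP=> x; rewrite inE; exact: sub0.
set A := (F :\: S) :|: O.
have OF u : u \in O -> u \notin F.
  by move=> uO; rewrite inE (porbit_nf uO).
have cFS : #|F :\: S| = (k - #[g])%N by rewrite cardsD (setIidPr SF) cF cS.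
have cA : #|A| = k.
  have : (F :\: S) :&: O = set0.
    apply/setP=> u; rewrite in_set0; apply/negP => /setIP[/setDP[uF _] uO].
    by move: (OF u uO); rewrite uF.
  move=> I0; have := cardsUI (F :\: S) O; rewrite I0 cards0 addn0 cFS cO => ->.
  by rewrite subnK // ltnW.
have cAc : #|~: A| = k.
  have := cardsC A; rewrite cA nT m2' => /eqP; rewrite mulnS muln1 eqn_add2l => /eqP //.
have gA : [set g u | u in A] = A.
  apply: set_inv => u; rewrite !inE => /orP[/andP[uS uF]|uO].
    by rewrite (eqP uF) uS uF.
  by rewrite memS uO orbT.
set f := fun x => if x \in A then A else ~: A.
have QO : f @: T \in uniform_partitions T k.
  apply: eqp_uniform.
  - by move=> x; rewrite /f; case: ifP => // xA; rewrite inE xA.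
  - move=> x y; rewrite /f; case: ifP => xA yin; first by rewrite yin.
    by move: yin; rewrite inE => /negbTE ->.
  - by move=> x; rewrite /f; case: ifP.
have Qfix : part_act g (f @: T) = f @: T.
  apply: part_act_fix => _ /imsetP[x _ ->]; rewrite /f; case: ifP => _ //.
  exact: set_invC.
have Qw := wuniq QO Qfix.
have AP : A \in w.
  rewrite -Qw; apply/imsetP; exists z => //.
  by rewrite /f ifT // inE (subsetP (subxx O)) ?orbT // porbit_id.
have : (0 < #|F :\: S|)%N by rewrite cFS subn_gt0.
rewrite card_gt0 => /set0Pn[x xFS].
have xA : x \in A by rewrite inE xFS.
have xF : x \in F by move: xFS; rewrite inE => /andP[].
have AF := blk_meet pP AP FP xA xF.
have zA : z \in A by rewrite inE porbit_id orbT.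
by move: (OF z (porbit_id g z)); rewrite -AF zA.
Qed.

Lemma nfblock B z : B \in w -> z \in B -> g z != z -> B = porbit g z.
Proof.
move=> BP zB nz; case: (boolP (B \subset porbit g z)) => [BO|/subsetPn[w0 w0B w0O]].
  by apply/eqP; rewrite eqEsubset BO blockO.
exfalso.
have Hall B'' : B'' \in w -> B'' != B -> forall v, v \in B'' -> g v = v.
  move=> B''P ne v vB; apply/eqP/negPn/negP => nv.
  have nBB : B != B'' by rewrite eq_sym.
  case: (boolP (g w0 == w0)) => fw0.
    apply: (swap_contra BP B''P nBB w0B zB vB nz nv).
      by apply/eqP => E; move/negP: w0O; apply; apply: porbit_mem_eq.
    apply/eqP => E; move/eqP: nBB; apply.
    exact: (blk_meet pP BP B''P w0B (in_orb B''P vB (porbit_mem_eq E))).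
  apply: (swap_contra BP B''P nBB zB w0B vB fw0 nv).
    by apply/eqP => E; move/negP: w0O; apply; rewrite E; exact: porbit_id.
  apply/eqP => E; move/eqP: nBB; apply.
  exact: (blk_meet pP BP B''P zB (in_orb B''P vB (porbit_mem_eq E))).
case: (boolP (g w0 == w0)) => fw0.
  have [B' B'P nB'] := other_block BP.
  have [x' x'B'] := nonempty_block B'P.
  have := fixblock B'P x'B' (Hall _ B'P nB' _ x'B') (eqP fw0).
  by move=> w0B'; move/eqP: nB'; apply; apply: (blk_meet pP B'P BP w0B' w0B).
exact: (E1 BP zB nz w0B w0O fw0 Hall).
Qed.

Lemma exists_nf : exists z, g z != z.
Proof.
apply/existsP; apply: contraT; rewrite negb_exists => /forallP H.
have g1 : g = 1 by apply/permP => z; rewrite perm1; apply/eqP; move/negPn: (H z).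
by move: (prime_gt1 pr); rewrite g1 order1.
Qed.

Lemma kp : k = #[g].
Proof.
have [z nz] := exists_nf.
have E := nfblock (blk_mem z pP) (blk_in z pP) nz.
by rewrite -(sw (blk_mem z pP)) E nf_sz.
Qed.

Lemma fixsz : #|[set x | g x == x]| = 0%N \/ #|[set x | g x == x]| = #[g].
Proof.
set F := [set x | g x == x].
case: (set_0Vmem F) => [->|[x xF]]; first by left; rewrite cards0.
right; have BP := blk_mem x pP; have xB := blk_in x pP.
have : pblock w x = F.
  apply/setP=> u; rewrite inE; apply/idP/idP => [uB|/eqP gu].
    apply/negPn/negP=> nu.
    have E := nfblock BP uB nu.
    have xO : x \in porbit g u by rewrite -E.
    by move: xF; rewrite inE (porbit_nf xO) (negbTE nu).
  by apply: (fixblock BP xB) => //; apply/eqP; move: xF; rewrite inE.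
by move=> <-; rewrite sw // -kp.
Qed.

Lemma diag : (ncycles g #[g] < #[g])%N.
Proof.
rewrite ltnNge; apply/negP => H.
have p1 := prime_gt1 pr.
set R := [set rep g x | x in [set x | g x != x]].
have cR : #|R| = ncycles g #[g] by rewrite (ncyclesq p1) //; move=> x; exact: nf_sz.
have [s [Us ss subs]] : exists s : seq T, [/\ uniq s, size s = #[g] & {subset s <= R}].
  by apply/card_geqP; rewrite cR.
have s1 : (1 < size s)%N by rewrite ss.
have Hs : forall a, a \in s -> rep g a = a /\ #|porbit g a| = #[g].
  move=> a /subs /imsetP[x]; rewrite inE => nx ->.
  by rewrite rep_rep porbit_rep nf_sz.
have [d [Hc Hr]] := rot_exists Us Hs.
have Hcd z : g (d z) = d (g z) by rewrite Hc.
set U := [set z | rep g z \in s].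
have nrep u : rep g u = u -> rep g (next s u) = next s u.
  move=> ru; case: (boolP (u \in s)) => us.
    by case: (Hs _ (etrans (mem_next _ _) us)).
  by rewrite next_notin.
have d3 x : rep g (d x) = next s (rep g x).
  rewrite -{1}(ex_specX g x) (commX Hc) Hr.
  by rewrite (rep_eq (porbit_perm _ _ _)) nrep // rep_rep.
have d3X i x : rep g ((d ^+ i) x) = iter i (next s) (rep g x).
  elim: i => [|i IH]; first by rewrite expg0 perm1.
  by rewrite expgSr permM d3 IH.
have repit i x : rep g (iter i (next s) (rep g x)) = iter i (next s) (rep g x).
  elim: i => [|i IH] /=; [exact: rep_rep | exact: nrep].
have dX i x : (d ^+ i) (rep g x) = iter i (next s) (rep g x).
  elim: i => [|i IH]; first by rewrite expg0 perm1.
  by rewrite expgSr permM IH -(repit i x) Hr (repit i x).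
have dp z : (d ^+ #[g]) z = z.
  apply: (@comm_rep_fix _ (d ^+ #[g]) g z).
    by move=> u; rewrite -(commX Hcd).
  by rewrite dX -ss iter_next.
have ordd : (#[d] %| #[g])%N by rewrite order_dvdn; apply/eqP/permP => z; rewrite perm1 dp.
have d6 z : z \in U -> d z != z.
  rewrite inE => zs; apply/eqP => E.
  have := d3 z; rewrite E => E2.
  by move: (next_neq Us s1 zs); rewrite -E2 eqxx.
have d6' z : z \in U -> #|porbit d z| = #[g].
  move=> zU; apply/(prime_nt_dvdP pr); last exact: dvdn_trans (porbit_dvd d z) ordd.
  by rewrite porbit1 d6.
have d8 z y : z \in U -> y \in porbit d z -> y \in U.
  rewrite !inE => zs /porbitP[i ->]; rewrite d3X.
  by elim: i => //= i IH; rewrite mem_next.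
have Ug z : (g z \in U) = (z \in U) by rewrite !inE repS.
set f := fun z => if z \in U then porbit d z else pblock w z.
have f1 z : z \in f z by rewrite /f; case: ifP => _; [exact: porbit_id | exact: blk_in].
have f2 z y : y \in f z -> f y = f z.
  rewrite /f; case: ifP => zU yin.
    by rewrite (d8 _ _ zU yin) (porbit_eq yin).
  case: ifP => yU.
    have nfy : g y != y.
      move: yU; rewrite inE => /Hs[_ sz]; rewrite -porbit1 -porbit_rep sz.
      by rewrite eq_sym neq_ltn p1.
    have E := nfblock (blk_mem z pP) yin nfy.
    have zO : z \in porbit g y by rewrite -E; exact: blk_in.
    by move: zU; rewrite inE (rep_eq (porbit_eq zO)); move: yU; rewrite inE => ->.
  exact: blk_eq pP (blk_mem z pP) yin.
have f3 z : #|f z| = k.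
  rewrite /f; case: ifP => zU; [by rewrite d6' // -kp | exact: sw (blk_mem z pP)].
have QO := eqp_uniform f1 f2 f3.
have gf z : [set g u | u in f z] = f (g z).
  rewrite /f Ug; case: ifP => zU.
    apply/setP=> u; apply/imsetP/porbitP.
      by case=> v /porbitP[i ->] ->; exists i; rewrite (commX Hcd).
    case=> i ->; exists ((d ^+ i) z); [exact: mem_porbit | by rewrite (commX Hcd)].
  rewrite blockG ?blk_mem //; apply/esym/(blk_eq pP (blk_mem _ pP)).
  rewrite -{1}(blockG (blk_mem z pP)); apply/imsetP; exists z => //; exact: blk_in.
have Qfix : part_act g (f @: T) = f @: T.
  rewrite /part_act -imset_comp (eq_imset _ gf).
  apply/setP=> B; apply/imsetP/imsetP=> -[z _ ->]; first by exists (g z).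
  by exists (g^-1 z) => //; rewrite permKV.
have Qw := wuniq QO Qfix.
have [z0 _] := exists_nf.
set u0 := nth z0 s 0.
have u0s : u0 \in s by apply: mem_nth; exact: ltnW s1.
have [ru0 su0] := Hs _ u0s.
have u0U : u0 \in U by rewrite inE ru0.
have fP : f u0 \in w by rewrite -Qw; exact: imset_f.
have nf0 : g u0 != u0 by rewrite -porbit1 su0 eq_sym neq_ltn p1.
have E := nfblock fP (f1 u0) nf0.
move: E; rewrite /f u0U => E.
have : d u0 \in porbit g u0 by rewrite -E; apply/porbitP; exists 1%N; rewrite expg1.
move/porbit_eq/rep_eq; rewrite d3 ru0 => E2.
by move: (next_neq Us s1 u0s); rewrite E2 eqxx.
Qed.

Lemma core_result : k = #[g] /\ (forall B, B \in w -> [set g x | x in B] = B) /\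
  ((ncycles g 1 = #[g] /\ ncycles g #[g] = m.-1 /\ (m <= #[g])%N) \/
   (ncycles g 1 = 0%N /\ ncycles g #[g] = m /\ (m < #[g])%N)).
Proof.
have p1 := prime_gt1 pr.
split; first exact: kp. split; first exact: blockG.
have [hT _] := L_type p1 (fun x => prime_sz x pr).
have dg := diag.
rewrite nT kp ncycles1 in hT.
case: fixsz => H; rewrite H in hT.
  right; split; first by rewrite ncycles1.
  have E : ncycles g #[g] = m by apply/eqP; rewrite -(eqn_pmul2l (ltnW p1)) hT.
  by split=> //; rewrite -E.
left; split; first by rewrite ncycles1.
have E : ncycles g #[g] = m.-1.
  apply/eqP; rewrite -(eqn_pmul2l (ltnW p1)) -(eqn_add2l #[g]) -hT.
  by case: m m2 => // m' _; rewrite mulnS.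
by split=> //; move: dg; rewrite E; case: m m2.
Qed.
End Core.

Section Conj.
Variable T : finType.
Implicit Types (g h c : {perm T}) (x y z : T) (A B : {set T}) (P : {set {set T}}).

Lemma bij_sets (A B : {set T}) : #|A| = #|B| ->
  exists f : T -> T, (forall x, x \in A -> f x \in B) /\ {in A &, injective f}.
Proof.
move=> E; case: (set_0Vmem A) => [A0|[x0 x0A]].
  by exists id; split=> // x; rewrite A0 inE.
exists (fun x => enum_val (cast_ord E (enum_rank_in x0A x))); split.
  move=> x _; exact: enum_valP.
move=> x y xA yA /enum_val_inj /cast_ord_inj H.
by rewrite -(enum_rankK_in x0A xA) -(enum_rankK_in x0A yA) H.
Qed.

Lemma type_sz g a q b : has_cycle_type_1l g a q b ->
  forall x, #|porbit g x| = 1%N \/ #|porbit g x| = q.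
Proof. case=> _ _ H x; apply: H; exact: imset_f. Qed.

Lemma conj_type g h a q b : (1 < q)%N -> has_cycle_type_1l g a q b ->
  has_cycle_type_1l h a q b -> exists phi : {perm T}, g ^ phi = h.
Proof.
move=> q1 tg th.
have szg := type_sz tg; have szh := type_sz th.
have nfq (s : {perm T}) : (forall x, #|porbit s x| = 1%N \/ #|porbit s x| = q) ->
    forall x, s x != x -> #|porbit s x| = q.
  move=> Hs x nx; case: (Hs x) => // /eqP; by rewrite porbit1 (negbTE nx).
case: tg => g1 gq _; case: th => h1 hq _.
have E1 : #|[set x | g x == x]| = #|[set x | h x == x]| by rewrite -!ncycles1 g1 h1.
have Eq : #|[set rep g x | x in [set x | g x != x]]| = #|[set rep h x | x in [set x | h x != x]]|.
  by rewrite -(ncyclesq q1 (nfq _ szg)) -(ncyclesq q1 (nfq _ szh)) gq hq.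
have [f1 [f1B f1i]] := bij_sets E1.
have [fq [fqB fqi]] := bij_sets Eq.
set psi := fun x => if g x == x then f1 x else fq x.
have Rnf s x : rep s x \in [set rep s y | y in [set y | s y != y]] -> s (rep s x) != rep s x.
  case/imsetP=> y; rewrite inE => ny ->; by rewrite (porbit_nf (rep_in s y)).
have repnf (s : {perm T}) x : (s (rep s x) == rep s x) = (s x == x) by rewrite (porbit_nf (rep_in s x)).
have psiE x : psi (rep g x) = if g x == x then f1 x else fq (rep g x).
  rewrite /psi repnf; case: ifP => // /eqP gx; by rewrite rep_fix.
have psi_fix x : g x = x -> h (psi (rep g x)) = psi (rep g x).
  move=> gx; rewrite psiE gx eqxx; apply/eqP.
  by move: (f1B x); rewrite !inE gx eqxx; apply.
have Rg x : g x != x -> rep g x \in [set rep g y | y in [set y | g y != y]].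
  by move=> nx; apply: imset_f; rewrite inE.
have psi_nf x : g x != x -> h (psi (rep g x)) != psi (rep g x).
  move=> nx; rewrite psiE (negbTE nx).
  by case/imsetP: (fqB _ (Rg x nx)) => y; rewrite inE => ny ->; rewrite (Rnf h y) // imset_f // inE.
have psi_rep x : rep h (psi (rep g x)) = psi (rep g x).
  case: (eqVneq (g x) x) => [gx|nx]; first by rewrite rep_fix // psi_fix.
  rewrite psiE (negbTE nx).
  by case/imsetP: (fqB _ (Rg x nx)) => y _ ->; rewrite rep_rep.
have H1 x : #|porbit h (psi (rep g x))| = #|porbit g x|.
  case: (eqVneq (g x) x) => [gx|nx].
    have e1 : #|porbit h (psi (rep g x))| == 1%N by rewrite porbit1 psi_fix.
    have e2 : #|porbit g x| == 1%N by rewrite porbit1 gx.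
    by rewrite (eqP e1) (eqP e2).
  by rewrite (nfq _ szh _ (psi_nf x nx)) (nfq _ szg _ nx).
have H2 x y : psi (rep g x) \in porbit h (psi (rep g y)) -> porbit g x = porbit g y.
  move/(reps_eq (psi_rep x) (psi_rep y)) => E.
  case: (eqVneq (g x) x) => [gx|nx]; case: (eqVneq (g y) y) => [gy|ny].
  - move: E; rewrite !psiE gx gy !eqxx => /f1i; rewrite !inE gx gy !eqxx => /(_ isT isT) ->.
    by [].
  - by move: (psi_nf y ny); rewrite -E psi_fix // eqxx.
  - by move: (psi_nf x nx); rewrite E psi_fix // eqxx.
  - move: E; rewrite !psiE (negbTE nx) (negbTE ny) => /fqi.
    by move=> /(_ (Rg x nx) (Rg y ny)) E; rewrite -porbit_rep E porbit_rep.
exists (eqv H1 H2); apply: conj_of; exact: eqv_comm.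
Qed.

Lemma rot_rep g (s : seq T) (phi : {perm T}) :
  (forall u, u \in s -> rep g u = u) ->
  (forall z, phi (g z) = g (phi z)) -> (forall x, phi (rep g x) = next s (rep g x)) ->
  forall x, rep g (phi x) = next s (rep g x).
Proof.
move=> Hs Hc Hr x.
have nrep u : rep g u = u -> rep g (next s u) = next s u.
  move=> ru; case: (boolP (u \in s)) => us; first by rewrite Hs // mem_next.
  by rewrite next_notin.
rewrite -{1}(ex_specX g x) (commX Hc) Hr.
by rewrite (rep_eq (porbit_perm _ _ _)) nrep // rep_rep.
Qed.

Lemma odd_permX g i : odd_perm (g ^+ i) = odd i && odd_perm g.
Proof.
elim: i => [|i IH]; first by rewrite expg0 odd_perm1.
by rewrite expgSr odd_permM IH /=; case: (odd i); case: (odd_perm g).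
Qed.

Lemma odd_order_even g : odd #[g] -> odd_perm g = false.
Proof.
move=> H; have := odd_permX g #[g]; rewrite expg_order odd_perm1 H /=.
by move=> <-.
Qed.

Lemma odd_centralizer g a b : prime #[g] -> odd #[g] ->
  has_cycle_type_1l g a #[g] b -> (2 <= a)%N \/ (2 <= b)%N ->
  exists tau : {perm T}, odd_perm tau /\ forall z, tau (g z) = g (tau z).
Proof.
move=> pr oddp tg Hab; have q1 := prime_gt1 pr.
have szg := type_sz tg.
case: tg => g1 gq _.
case: Hab => Ha.
  have : (1 < #|[set x | g x == x]|)%N by rewrite -ncycles1 g1.
  case/card_gt1P => x [y [xF yF xy]]; move: xF yF; rewrite !inE => /eqP gx /eqP gy.
  exists (tperm x y); split; first by rewrite odd_tperm.
  move=> u; case: (tpermP x y u) => [->|->|ux uy]; rewrite ?gx ?gy ?tpermL ?tpermR //.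
  rewrite tpermD //; apply/eqP => E; [apply: ux | apply: uy];
    apply: (@perm_inj _ g); by rewrite ?gx ?gy E.
have nfq x : g x != x -> #|porbit g x| = #[g].
  move=> nx; case: (szg x) => // /eqP; by rewrite porbit1 (negbTE nx).
set R := [set rep g x | x in [set x | g x != x]].
have : (1 < #|R|)%N by rewrite -(ncyclesq q1 nfq) gq.
case/card_gt1P => r1 [r2 [r1R r2R r12]].
have HR r : r \in R -> rep g r = r /\ #|porbit g r| = #[g] /\ g r != r.
  case/imsetP=> x; rewrite inE => nx ->; rewrite rep_rep porbit_rep nfq //.
  by rewrite (porbit_nf (rep_in g x)).
set s := [:: r1; r2].
have Us : uniq s by rewrite /s /= inE r12.
have Hs u : u \in s -> rep g u = u /\ #|porbit g u| = #[g].
  by rewrite !inE => /orP[]/eqP ->; case: (HR _ r1R) => [? []]; case: (HR _ r2R) => [? []].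
have [sg [Hc Hr]] := rot_exists Us Hs.
have rr := rot_rep (fun u us => (Hs u us).1) Hc Hr.
exists sg; split => //.
have s2 : size s = 2 by [].
have nsq u : next s (next s u) = u by have := iter_next u Us; rewrite s2.
have sg2 z : sg (sg z) = z.
  apply: (@comm_rep_fix _ (fun z => sg (sg z)) g z).
    by move=> u; rewrite /= !Hc.
  rewrite /= Hr.
  have ru : rep g (next s (rep g z)) = next s (rep g z) by rewrite -Hr rr rep_rep.
  by rewrite -{1}ru Hr ru nsq.
have ord2 : (#[sg] %| 2)%N.
  by rewrite order_dvdn; apply/eqP/permP => z; rewrite expgS expg1 permM sg2 perm1.
have sz2 x : #|porbit sg x| = 1%N \/ #|porbit sg x| = 2.
  case: (eqVneq #|porbit sg x| 1%N) => [->|ne]; first by left.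
  by right; apply/(prime_nt_dvdP (isT : prime 2) ne)/(dvdn_trans (porbit_dvd sg x) ord2).
have repin r z : rep g r = r -> (rep g z == r) = (z \in porbit g r).
  move=> rr'; apply/eqP/idP => [<-|zr]; first by rewrite porbit_rep porbit_id.
  by rewrite (rep_eq (porbit_eq zr)) rr'.
have [r1r [r1s r1n]] := HR _ r1R; have [r2r [r2s r2n]] := HR _ r2R.
have FsE : [set z | sg z == z] = ~: (porbit g r1 :|: porbit g r2).
  apply/setP=> z; rewrite !inE -(repin _ _ r1r) -(repin _ _ r2r).
  case: (boolP (rep g z \in s)) => zs.
    have := next_neq Us (isT : (1 < size s)%N) zs; rewrite -rr => nz.
    move: zs; rewrite !inE => ->; apply/negbTE; apply: contra nz => /eqP ->.
    by rewrite eqxx.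
  move: (zs); rewrite !inE => /norP[/negbTE -> /negbTE ->]; apply/eqP.
  by apply: (comm_rep_fix Hc); rewrite Hr next_notin.
have cU : #|porbit g r1 :|: porbit g r2| = (#[g] + #[g])%N.
  have : porbit g r1 :&: porbit g r2 = set0.
    apply/setP=> z; rewrite in_set0 inE -(repin _ _ r1r) -(repin _ _ r2r).
    by apply/negP=> /andP[/eqP -> /eqP E]; move: r12; rewrite E eqxx.
  by move=> I0; have := cardsUI (porbit g r1) (porbit g r2); rewrite I0 cards0 addn0 r1s r2s.
have [hT hP] := L_type (isT : (1 < 2)%N) sz2.
rewrite ncycles1 FsE in hT hP.
have cC := cardsC (porbit g r1 :|: porbit g r2); rewrite cU in cC.
have c2 : ncycles sg 2 = #[g].
  apply/eqP; rewrite -(eqn_pmul2l (isT : (0 < 2)%N)) -(eqn_add2l #|~: (porbit g r1 :|: porbit g r2)|) -hT.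
  by rewrite -cC mul2n -addnn addnC.
rewrite /odd_perm hP c2 -cC.
by rewrite !oddD oddp; case: (odd _).
Qed.
End Conj.

Section Exist.
Variable T : finType.
Implicit Types (g h c : {perm T}) (x y z : T) (A B : {set T}) (P : {set {set T}}).

Lemma part_sub_eq P Q : partition P [set: T] -> partition Q [set: T] ->
  P \subset Q -> P = Q.
Proof.
move=> pP pQ PQ; apply/eqP; rewrite eqEsubset PQ /=.
apply/subsetP=> B BQ; have [x xB] := blk_n0 pQ BQ.
have bP := blk_mem x pP.
by rewrite -(blk_meet pQ (subsetP PQ _ bP) BQ (blk_in x pP) xB).
Qed.

Lemma exist_crit g m : prime #[g] -> #|[set x | g x == x]| = #[g] ->
  #|T| = (#[g] * m)%N -> (m <= #[g])%N ->
  quasi_semiregular g (uniform_partitions T #[g]).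
Proof.
move=> pr cF nT mp; have p1 := prime_gt1 pr.
set F := [set x | g x == x].
set f := fun z => if g z == z then F else porbit g z.
have f1 z : z \in f z by rewrite /f; case: ifP => H; [rewrite inE H | exact: porbit_id].
have f2 z y : y \in f z -> f y = f z.
  rewrite /f; case: ifP => H yin.
    by move: yin; rewrite inE => ->.
  by rewrite (porbit_nf yin) H (porbit_eq yin).
have f3 z : #|f z| = #[g] by rewrite /f; case: ifP => H //; rewrite nf_sz // H.
have wO := eqp_uniform f1 f2 f3.
have memS x0 u : (g u \in porbit g x0) = (u \in porbit g x0).
  by rewrite -!eq_porbit_mem porbitS.
have wfix : part_act g (f @: T) = f @: T.
  apply: part_act_fix => _ /imsetP[z _ ->]; apply: set_inv => u.
  rewrite /f; case: ifP => _; last by rewrite memS.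
  by rewrite !inE => /eqP gu; rewrite !gu eqxx.
apply: (fix_qsr pr wO wfix) => Q QO Qfix.
have [pQ sQ] := unif_part QO.
have cQ : #|Q| = m.
  have := card_uniform_partition sQ pQ; rewrite cardsT nT mulnC => /eqP.
  by rewrite eqn_pmul2r ?(ltnW p1) // => /eqP.
set pi := perm (imset_inj (@perm_inj _ g)).
have piE B : pi B = [set g u | u in B] by rewrite permE.
have piX i B : (pi ^+ i) B = [set (g ^+ i) u | u in B].
  elim: i => [|i IH].
    rewrite expg0 perm1 -[LHS]imset_id; apply: eq_imset => u; by rewrite perm1.
  rewrite expgSr permM IH piE -imset_comp; apply: eq_imset => u /=; by rewrite expgSr permM.
have ordpi : (#[pi] %| #[g])%N.
  rewrite order_dvdn; apply/eqP/permP => B; rewrite piX expg_order perm1.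
  rewrite -[RHS]imset_id; apply: eq_imset => u; by rewrite perm1.
have inQ i B : B \in Q -> (pi ^+ i) B \in Q.
  by move=> BQ; rewrite piX -(part_actX Qfix i); apply: imset_f.
have [x0 x0F] : exists x0, x0 \in F.
  by apply/set0Pn; rewrite -card_gt0 cF prime_gt0.
set B0 := pblock Q x0.
have B0Q : B0 \in Q := blk_mem x0 pQ.
have piB0 : pi B0 = B0.
  apply: (blk_meet pQ _ B0Q (x := x0)); first by rewrite -(expg1 pi) inQ.
    rewrite piE; apply/imsetP; exists x0; first exact: blk_in.
    by move: x0F; rewrite inE => /eqP ->.
  exact: blk_in.
have inv B : B \in Q -> pi B = B.
  move=> BQ; apply/eqP/negPn/negP => nB.
  have sz : #|porbit pi B| = #[g].
    apply/(prime_nt_dvdP pr); first by rewrite porbit1.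
    exact: dvdn_trans (porbit_dvd pi B) ordpi.
  have sub : porbit pi B \subset Q :\ B0.
    apply/subsetP=> C /porbitP[i ->]; rewrite !inE inQ // andbT.
    apply/eqP => E.
    have : #|porbit pi B0| == 1%N by rewrite porbit1 piB0.
    by rewrite -E porbit_perm sz => /eqP H; move: p1; rewrite H.
  have c1 := subset_leq_card sub; rewrite sz in c1.
  have c2 := cardsD1 B0 Q; rewrite B0Q cQ add1n in c2.
  by have := leq_trans mp c1; rewrite c2 ltnn.
have invX i B : B \in Q -> [set (g ^+ i) u | u in B] = B.
  by move=> BQ; rewrite -piX; elim: i => [|i IH]; rewrite ?expg0 ?perm1 // expgSr permM IH inv.
have orbB B u : B \in Q -> u \in B -> porbit g u \subset B.
  move=> BQ uB; apply/subsetP=> _ /porbitP[i ->]; rewrite -(invX i B BQ).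
  exact: imset_f.
apply: part_sub_eq => //; first exact: eqp_partition f1 f2.
apply/subsetP=> B BQ; have [u uB] := blk_n0 pQ BQ.
case: (boolP [exists v, (v \in B) && (g v != v)]).
  case/existsP=> v /andP[vB nv].
  have : porbit g v == B by rewrite eqEcard (orbB _ _ BQ vB) (nf_sz pr nv) (sQ _ BQ) leqnn.
  move/eqP=> <-; apply/imsetP; exists v => //; by rewrite /f (negbTE nv).
rewrite negb_exists => /forallP Hn.
have BF : B \subset F.
  by apply/subsetP=> v vB; move: (Hn v); rewrite vB /= negbK inE.
have : B == F by rewrite eqEcard BF cF (sQ _ BQ) leqnn.
move/eqP=> ->; apply/imsetP; exists u => //.
by rewrite /f; move: (Hn u); rewrite uB /= negbK => ->.
Qed.
End Exist.

Definition fn (p i : nat) : nat := if (i < p)%N then i else (i %/ p * p + (i %% p).+1 %% p)%N.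

Section Fn.
Variable p : nat.
Hypothesis p1 : (1 < p)%N.
Let p0 : (0 < p)%N := ltnW p1.

Lemma fn_formula q r : (p <= q * p + r)%N -> (r < p)%N ->
  fn p (q * p + r) = (q * p + r.+1 %% p)%N.
Proof.
move=> H rp; rewrite /fn ltnNge H /=.
by rewrite divnMDl // divn_small // addn0 modnMDl (modn_small rp).
Qed.

Lemma fn_iter i j : (p <= i)%N -> iter j (fn p) i = (i %/ p * p + (i %% p + j) %% p)%N.
Proof.
move=> pi; have q1 : (0 < i %/ p)%N by rewrite divn_gt0.
elim: j => [|j IH]; first by rewrite addn0 modn_mod -divn_eq.
rewrite iterS IH fn_formula ?ltn_pmod //; last first.
  by apply: leq_trans (leq_addr _ _); rewrite -{1}(mul1n p) leq_mul2r q1 orbT.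
by rewrite -addn1 modnDml -addnA addn1.
Qed.

Lemma fn_iterp i : iter p (fn p) i = i.
Proof.
case: (ltnP i p) => H.
  have E j : iter j (fn p) i = i by elim: j => //= j ->; rewrite /fn H.
  exact: E.
by rewrite fn_iter // modnDr modn_mod -divn_eq.
Qed.

Lemma fn_inj : injective (fn p).
Proof.
move=> i j E.
have H x : iter p (fn p) x = iter p.-1 (fn p) (fn p x) by rewrite -iterSr prednK.
by rewrite -(fn_iterp i) -(fn_iterp j) !H E.
Qed.

Lemma fn_lt m i : (i < p * m)%N -> (fn p i < p * m)%N.
Proof.
move=> H; rewrite /fn; case: ifP => // ip.
have qm : (i %/ p < m)%N by rewrite ltn_divLR // mulnC.
apply: (@leq_trans ((i %/ p).+1 * p)).
  by rewrite mulSnr ltn_add2l ltn_pmod.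
by rewrite mulnC leq_mul2l qm orbT.
Qed.

Lemma fn_fix i : (fn p i == i) = (i < p)%N.
Proof.
rewrite /fn; case: ifP => ip; first by rewrite eqxx.
apply/negbTE; apply/negP => /eqP E.
have := congr1 (modn^~ p) E; rewrite modnMDl modn_mod => E2.
have ltm := ltn_pmod i p0.
case: (ltngtP (i %% p).+1 p) => H.
- by move: E2; rewrite modn_small //; lia.
- lia.
- by move: E2; rewrite H modnn; lia.
Qed.
End Fn.

Lemma exists_elt n p m : prime p -> n = (p * m)%N -> (1 < m)%N ->
  exists g : {perm 'I_n}, #[g] = p /\ #|[set x | g x == x]| = p.
Proof.
move=> pr nE m1; have p1 := prime_gt1 pr.
have ltf (i : 'I_n) : (fn p i < n)%N.
  have H : (nat_of_ord i < p * m)%N by rewrite -nE ltn_ord.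
  by rewrite (leq_trans (fn_lt p1 H)) // nE.
set gf := fun i : 'I_n => Ordinal (ltf i).
have gi : injective gf.
  by move=> i j /(congr1 val) /= /(fn_inj p1) /val_inj.
set g := perm gi.
have gX j (i : 'I_n) : val ((g ^+ j) i) = iter j (fn p) i.
  rewrite permX; elim: j => //= j IH; by rewrite permE /= IH.
have gp : g ^+ p = 1 by apply/permP => i; apply/val_inj; rewrite gX perm1 fn_iterp.
have pn : (p < n)%N by rewrite nE -{1}(muln1 p) ltn_mul2l ltnW // m1.
have ord1 : #[g] != 1%N.
  apply/negP => /eqP E; have := expg_order g; rewrite E expg1 => g1.
  have := gX 1%N (Ordinal pn); rewrite g1 expg1 perm1 /= => /eqP.
  by rewrite eq_sym (fn_fix p1) ltnn.
exists g; split; first by apply/(prime_nt_dvdP pr ord1); rewrite order_dvdn gp.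
have le : (p <= n)%N by exact: ltnW.
have -> : [set x | g x == x] = [set widen_ord le j | j : 'I_p].
  apply/setP=> x; rewrite inE; apply/idP/imsetP.
    move/eqP/(congr1 val); rewrite permE /= => /eqP; rewrite (fn_fix p1) => xp.
    by exists (Ordinal xp) => //; apply/val_inj.
  case=> j _ ->; apply/eqP/val_inj; rewrite permE /=; apply/eqP; by rewrite (fn_fix p1).
rewrite card_imset ?card_ord //.
by move=> a b /(congr1 val) /= /val_inj.
Qed.

Lemma class_lemma (T : finType) (G : {set {perm T}}) g a b :
  (G = 'Sym_T \/ G = 'Alt_T) -> g \in G -> prime #[g] -> odd #[g] ->
  has_cycle_type_1l g a #[g] b -> (2 <= a \/ 2 <= b)%N ->
  forall h, h \in G -> (has_cycle_type_1l h a #[g] b <-> h \in g ^: G).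
Proof.
move=> HG gG pr oddp tg Hab h hG; split; last by case/imsetP=> x _ ->; exact: typeJ.
move=> th; have [phi E] := conj_type (prime_gt1 pr) tg th.
case: HG => HG; subst G.
  by apply/imsetP; exists phi; rewrite ?inE.
case: (boolP (odd_perm phi)) => op; last by apply/imsetP; exists phi; rewrite ?Alt_even.
have [tau [ot Ht]] := odd_centralizer pr oddp tg Hab.
apply/imsetP; exists (tau * phi).
  by rewrite Alt_even odd_permM ot op.
by rewrite conjgM (conj_of Ht).
Qed.

Lemma type_of (T : finType) (g : {perm T}) a b : prime #[g] ->
  ncycles g 1 = a -> ncycles g #[g] = b -> has_cycle_type_1l g a #[g] b.
Proof.
move=> pr h1 h2; split=> // O /imsetP[x _ ->]; exact: prime_sz.
Qed.

Unset Implicit Arguments.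
Theorem proposition6p4 (n k m : nat) (G : {set {perm 'I_n}}) :
  4 < n -> 1 < k -> (k <= n %/ 2)%N -> (n = k * m)%N ->
  (G = 'Sym_('I_n) \/ G = 'Alt_('I_n)) ->
  (forall p, prime p ->
     ((exists2 g, g \in G & #[g] = p /\ quasi_semiregular g (uniform_partitions 'I_n k))
      <-> [/\ odd p, k = p & (2 <= m <= p)%N])) /\
  (forall (g : {perm 'I_n}) (Gamma : {set {set 'I_n}}),
     g \in G -> prime #[g] ->
     quasi_semiregular g (uniform_partitions 'I_n k) ->
     Gamma \in uniform_partitions 'I_n k -> part_act g Gamma = Gamma ->
     [/\ g \in 'Alt_('I_n),
         (forall B, B \in Gamma -> [set g x | x in B] = B) &
         (m = #[g] /\
            has_cycle_type_1l g #[g] #[g] m.-1 /\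
            (forall h, h \in G -> (has_cycle_type_1l h #[g] #[g] m.-1 <-> h \in g ^: G)))
         \/
         ((2 <= m < #[g])%N /\
            ((has_cycle_type_1l g #[g] #[g] m.-1 /\
              (forall h, h \in G -> (has_cycle_type_1l h #[g] #[g] m.-1 <-> h \in g ^: G))) \/
             (has_cycle_type_1l g 0 #[g] m /\
              (forall h, h \in G -> (has_cycle_type_1l h 0 #[g] m <-> h \in g ^: G)))))]).
Proof.
move=> n4 k1 kn nkm HG.
have m2 : (2 <= m)%N.
  case: m nkm => [|[|m']] nkm //.
    by move: n4; rewrite nkm muln0.
  move: kn; rewrite nkm muln1 => kn.
  have := ltn_Pdiv (isT : (1 < 2)%N) (ltnW k1).
  by rewrite ltnNge kn.
have cT : #|'I_n| = (k * m)%N by rewrite card_ord.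
have oddP p : prime p -> (m <= p)%N -> k = p -> odd p.
  move=> pr mp kp; apply/negPn/negP => /(prime_oddPn pr) p2.
  rewrite kp p2 in nkm; rewrite p2 in mp; lia.
have inG g : odd #[g] -> g \in G.
  move=> og; have gA : g \in 'Alt_('I_n) by rewrite Alt_even odd_order_even.
  by case: HG => ->; [rewrite /Sym inE | exact: gA].
split.
  move=> p pr; split.
    case=> g gG [og qsr]; have [w wO [wfix wuniq]] := qsr_fix qsr.
    have prg : prime #[g] by rewrite og.
    have [kp [_ br]] := core_result prg k1 m2 cT wO wfix wuniq.
    have mp : (m <= #[g])%N by case: br => [[_ [_ H]]|[_ [_ H]]] //; exact: ltnW.
    rewrite -og; split; [exact: oddP | by [] | by rewrite m2].
  case=> oddp kp /andP[_ mp].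
  have [g [og cF]] := exists_elt pr (etrans nkm (congr1 (muln^~ m) kp)) m2.
  exists g; first by apply: inG; rewrite og.
  split=> //; rewrite kp -og; apply: (exist_crit (m := m)).
  - by rewrite og.
  - by rewrite og.
  - by rewrite og -kp.
  - by rewrite og.
move=> g Gamma gG pr qsr GO Gfix.
have [w wO [wfix wuniq]] := qsr_fix qsr.
have GE := wuniq _ GO Gfix.
have [kp [blk br]] := core_result pr k1 m2 cT wO wfix wuniq.
have mp : (m <= #[g])%N by case: br => [[_ [_ H]]|[_ [_ H]]] //; exact: ltnW.
have og := oddP _ pr mp kp.
have gA : g \in 'Alt_('I_n) by rewrite Alt_even odd_order_even.
split=> //; first by rewrite GE.
case: br => [[h1 [hp H]]|[h1 [hp H]]].
  have tg := type_of pr h1 hp.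
  have cl := class_lemma HG gG pr og tg (or_introl (prime_gt1 pr)).
  case: (ltngtP m #[g]) => Hm.
  - by right; split; [rewrite m2 | left].
  - by move: mp; rewrite leqNgt Hm.
  - by left.
have tg := type_of pr h1 hp.
have cl := class_lemma HG gG pr og tg (or_intror m2).
by right; split; [rewrite m2 | right].
Qed.
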